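(* Let $(1,f_0,\dots,f_{d-1})$ be the $f$-vector of a simplicial complex. Then $\mu_{i+1}\big((i+2)f_i\big)\le (i+1)f_{i-1}$ for all $1\le i\le d-1$.
   Context: For positive integers $m,i$ let $m=\binom{a_i}{i}+\binom{a_{i-1}}{i-1}+\cdots+\binom{a_j}{j}$ with $a_i>\cdots>a_j\ge j\ge1$ be its unique $i$-th binomial expansion, and $\mu_i(m)=\binom{a_i}{i-1}+\binom{a_{i-1}}{i-2}+\cdots+\binom{a_j}{j-1}$; set $\mu_i(0)=0$. The $f$-vector of a simplicial complex is $(f_{-1},f_0,\dots)$ with $f_i$ the number of faces of cardinality $i+1$, $f_{-1}=1$. *)

(* Defs.v *)
From mathcomp Require Import all_boot.
Set Implicit Arguments. Unset Strict Implicit. Unset Printing Implicit Defensive.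

Definition simplicial_complex (T : finType) (D : {set {set T}}) : Prop :=
  set0 \in D /\ forall s t : {set T}, s \in D -> t \subset s -> t \in D.

(* fnum D k = number of faces of cardinality k; so f_i = fnum D i.+1
   and f_{-1} = fnum D 0 = 1. *)
Definition fnum (T : finType) (D : {set {set T}}) (k : nat) : nat :=
  #|[set s in D | #|s| == k]|.

(* d = maximal cardinality of a face, so the f-vector is (f_{-1},...,f_{d-1}). *)
Definition cdim (T : finType) (D : {set {set T}}) : nat :=
  \max_(s in D) #|s|.

(* a = [:: a_i; a_{i-1}; ...; a_j] is an i-th binomial expansion of m:
   m = C(a_i,i) + ... + C(a_j,j), a_i > ... > a_j >= j >= 1. *)
Definition binom_exp (i m : nat) (a : seq nat) : Prop :=
  [/\ 0 < size a <= i,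
      sorted (fun x y => y < x) a,
      i - (size a).-1 <= last 0 a &
      m = \sum_(t < size a) 'C(nth 0 a t, i - t)].

Definition mu_spec (i m v : nat) : Prop :=
  (m = 0 /\ v = 0) \/
  (0 < m /\ exists a, binom_exp i m a /\ v = \sum_(t < size a) 'C(nth 0 a t, (i - t).-1)).

(* Main.v *)
Require Import Defs.
From mathcomp Require Import all_boot zify.
Set Implicit Arguments. Unset Strict Implicit. Unset Printing Implicit Defensive.

Fixpoint topf (k m n : nat) : nat :=
  match n with 0 => 0 | n'.+1 => if 'C(n, k) <= m then n else topf k m n' end.

Definition top k m := topf k m (m + k).

Fixpoint fk (k m : nat) : nat :=
  match k with
  | 0 => 0
  | k'.+1 => if m == 0 then 0 else 'C(top k m, k') + fk k' (m - 'C(top k m, k))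
  end.

Lemma topf_le k m n : 0 < k -> 'C(topf k m n, k) <= m.
Proof.
move=> k0; elim: n => [|n IH] /=; first by rewrite bin_small.
by case: ifP.
Qed.

Lemma topf_max k m n a : a <= n -> 'C(a, k) <= m -> a <= topf k m n.
Proof.
elim: n => [|n IH] /=; first by rewrite leqn0 => /eqP->.
rewrite leq_eqVlt => /orP [/eqP-> ->//|]; rewrite ltnS => Ha Hc.
case: ifP => _; [exact: leqW|exact: IH].
Qed.

Lemma bin_big k m : 0 < k -> m < 'C((m + k).+1, k).
Proof.
case: k => // k _; elim: k => [|k IH]; first by rewrite bin1 addn1.
rewrite binS; apply: leq_trans (leq_addl _ _); move: IH; by rewrite !addnS.
Qed.

Lemma topP k m : 0 < k -> 'C(top k m, k) <= m < 'C((top k m).+1, k).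
Proof.
move=> k0; rewrite topf_le //=; rewrite ltnNge; apply/negP => H.
case: (leqP (top k m).+1 (m + k)) => h.
  by have := topf_max h H; rewrite /top ltnn.
have := leq_bin2l k h; move=> h2; have := leq_trans h2 H.
by rewrite leqNgt bin_big.
Qed.

Lemma top_uniq k m a : 0 < k -> 'C(a, k) <= m < 'C(a.+1, k) -> top k m = a.
Proof.
move=> k0 /andP [H1 H2]; have /andP [T1 T2] := topP m k0.
apply/eqP; rewrite eqn_leq; apply/andP; split.
  rewrite leqNgt; apply/negP => h; have := leq_bin2l k h.
  by move=> h2; have := leq_trans h2 T1; rewrite leqNgt H2.
rewrite leqNgt; apply/negP => h; have := leq_bin2l k h.
by move=> h2; have := leq_trans h2 H1; rewrite leqNgt T2.
Qed.

Lemma fk0 k : fk k 0 = 0. Proof. by case: k. Qed.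

Lemma fE k b s : s < 'C(b, k) -> (k.+1 <= b) || (0 < s) ->
  fk k.+1 ('C(b, k.+1) + s) = 'C(b, k) + fk k s.
Proof.
move=> hs hb /=.
have nz : ('C(b, k.+1) + s == 0) = false.
  apply/negbTE; rewrite -lt0n; case/orP: hb => h; last by rewrite ltn_addl.
  by rewrite ltn_addr // bin_gt0.
rewrite nz; have -> : top k.+1 ('C(b, k.+1) + s) = b.
  by apply: top_uniq => //; rewrite leq_addr /= binS ltn_add2l.
by rewrite addKn.
Qed.

Lemma fkC k b : k.+1 <= b -> fk k.+1 'C(b, k.+1) = 'C(b, k).
Proof.
move=> h; have := @fE k b 0; rewrite addn0 fk0 addn0; apply => //.
  by rewrite bin_gt0; apply: ltnW.
by rewrite h.
Qed.

Lemma fk_pos k m : 0 < k -> 0 < m -> 0 < fk k m.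
Proof.
case: k => // k _ m0 /=; have -> : (m == 0) = false by case: m m0.
have /andP [_ h] := topP m (ltn0Sn k).
apply: ltn_addr; rewrite bin_gt0.
have : 0 < 'C((top k.+1 m).+1, k.+1) by apply: leq_ltn_trans h.
by rewrite bin_gt0.
Qed.

Lemma fk_mono1 k m : fk k m <= fk k m.+1.
Proof.
elim: k m => [|k IH] m //.
have IHm : forall a b, a <= b -> fk k a <= fk k b.
  move=> a b /subnK <-; elim: (b - a) => [|d IHd]; first by [].
  by rewrite addSn; apply: leq_trans IHd (IH _).
case: (posnP m) => [->|m0]; first by [].
have /andP [Ha1 Ha2] := topP m (ltn0Sn k).
move: (top k.+1 m) Ha1 Ha2 => a Ha1 Ha2.
have Em : m = 'C(a, k.+1) + (m - 'C(a, k.+1)) by rewrite subnKC.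
have hr : m - 'C(a, k.+1) < 'C(a, k).
  by move: Ha2; rewrite binS; lia.
case: (ltnP m.+1 'C(a.+1, k.+1)) => h.
  rewrite Em -addnS !fE //; first by rewrite leq_add2l IH.
  - by move: h; rewrite binS; lia.
  - by rewrite orbT.
  - by case: (leqP k.+1 a) => // ha; rewrite bin_small // subn0.
have Em1 : m.+1 = 'C(a.+1, k.+1) by apply/eqP; rewrite eqn_leq h Ha2.
rewrite Em1 fkC; last first.
  by rewrite ltnNge; apply/negP => hh; move: Em1; rewrite bin_small.
rewrite Em fE //; last by case: (leqP k.+1 a) => // ha; rewrite bin_small // subn0.
case: k IH IHm hr Em1 {Ha1 Ha2 Em h} => [|k] IH IHm hr Em1; first by rewrite /= addn0 !bin0.
rewrite binS leq_add2l.
case: (leqP k.+1 a) => ha.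
  rewrite -(fkC ha); apply: IHm; lia.
by rewrite (bin_small ha) in hr.
Qed.

Lemma fk_mono k a b : a <= b -> fk k a <= fk k b.
Proof.
move=> /subnK <-; elim: (b - a) => [|d IHd]; first by [].
by rewrite addSn; apply: leq_trans IHd (fk_mono1 _ _).
Qed.

Lemma fk1 m : fk 1 m = (0 < m).
Proof. by rewrite /=; case: m => //= m; rewrite bin0. Qed.

Lemma fk_top_ge k m : 0 < m -> k.+1 <= top k.+1 m.
Proof.
move=> m0; have /andP [_ h] := topP m (ltn0Sn k).
rewrite ltnNge; apply/negP => ha.
have := @leq_bin2l _ _ k.+1 (ha : (top k.+1 m).+1 <= k.+1); rewrite binn => h2.
by have := leq_trans h h2; rewrite ltnS leqn0 => /eqP m00; rewrite m00 in m0.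
Qed.

Lemma fk_split k m : 0 < m ->
  fk k.+1 m = 'C(top k.+1 m, k) + fk k (m - 'C(top k.+1 m, k.+1)).
Proof. by move=> m0 /=; case: m m0. Qed.

Lemma fkN j m x : 0 < x -> fk j.+1 (m - x) <= x -> fk j.+1 m <= x + fk j x.
Proof.
elim: j m x => [|k IH] m x x0 H.
  by rewrite fk1 /= addn0; case: (0 < m).
case: (posnP m) => [->|m0]; first by rewrite fk0.
have /andP [Ha1 Ha2] := topP m (ltn0Sn k.+1).
have aK := fk_top_ge k.+1 m0.
rewrite (@fk_split k.+1 m m0).
move: (top k.+2 m) Ha1 Ha2 aK => [//|b] Ha1 Ha2 aK.
move Er: (m - 'C(b.+1, k.+2)) => r.
have Em : m = 'C(b.+1, k.+2) + r by rewrite -Er subnKC.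
have hr : r < 'C(b.+1, k.+1) by move: Ha2; rewrite binS; lia.
case: (leqP 'C(b.+1, k.+1) x) => hx.
  have := fk_mono k.+1 (ltnW (leq_trans hr hx)); lia.
have EC1 : 'C(b.+1, k.+1) = 'C(b, k.+1) + 'C(b, k) by rewrite binS.
have EC2 : 'C(b.+1, k.+2) = 'C(b, k.+2) + 'C(b, k.+1) by rewrite binS.
have contra : 'C(b.+1, k.+2) <= m - x -> False.
  move=> hh; have := fk_mono k.+2 hh; rewrite fkC // => h2.
  have := leq_trans h2 H; rewrite leqNgt hx //.
case: (ltnP x 'C(b, k.+1)) => hxb.
  exfalso.
  have h1 : 'C(b, k.+2) + 1 <= m - x by lia.
  have := fk_mono k.+2 h1; rewrite fE; last by rewrite orbT.
    have := fk_pos (ltn0Sn k) (ltn0Sn 0); lia.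
  lia.
move Ey: (x - 'C(b, k.+1)) => y.
have Ex : x = 'C(b, k.+1) + y by rewrite -Ey subnKC.
have hy : y < 'C(b, k) by lia.
have Hry : fk k.+1 (r - y) <= y.
  case: (posnP (r - y)) => [->|ry]; first by rewrite fk0.
  have Emx : m - x = 'C(b, k.+2) + (r - y) by lia.
  case: (ltnP (r - y) 'C(b, k.+1)) => hry.
    by move: H; rewrite Emx fE ?ry ?orbT //; lia.
  by exfalso; apply: contra; lia.
have Efx : fk k.+1 x = 'C(b, k) + fk k y.
  by rewrite Ex fE // (aK : k.+1 <= b).
rewrite Efx EC1.
case: (posnP y) => y0.
  by move: Hry; rewrite y0 subn0 fk0; lia.
have := IH r y y0 Hry; lia.
Qed.

Definition Ssum (a : seq nat) k := \sum_(t < size a) 'C(nth 0 a t, k - t).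
Definition Smu (a : seq nat) k := \sum_(t < size a) 'C(nth 0 a t, (k - t).-1).
Definition valid k (a : seq nat) :=
  [/\ 0 < size a <= k, sorted (fun x y => y < x) a & k - (size a).-1 <= last 0 a].

Lemma subSpred k i : k - i.+1 = k.-1 - i.
Proof. by case: k. Qed.

Lemma Ssum_cons h rest k : Ssum (h :: rest) k = 'C(h, k) + Ssum rest k.-1.
Proof.
rewrite /Ssum /= big_ord_recl subn0; congr (_ + _); apply: eq_bigr => i _.
by rewrite /= /bump /= add0n add1n subSpred.
Qed.

Lemma Smu_cons h rest k : Smu (h :: rest) k = 'C(h, k.-1) + Smu rest k.-1.
Proof.
rewrite /Smu /= big_ord_recl subn0; congr (_ + _); apply: eq_bigr => i _.
by rewrite /= /bump /= add0n add1n subSpred.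
Qed.

Lemma Ssum_nil k : Ssum [::] k = 0. Proof. by rewrite /Ssum big_ord0. Qed.
Lemma Smu_nil k : Smu [::] k = 0. Proof. by rewrite /Smu big_ord0. Qed.

Lemma valid_tail h h2 rest k : valid k [:: h, h2 & rest] ->
  [/\ valid k.-1 (h2 :: rest), h2 < h & 1 < k].
Proof.
case: k => [|k]; first by case=> /andP [].
rewrite /valid /= => -[hs /andP [h21 hsort] hl]; split => //.
by move: hs; rewrite !ltnS; case: (k) => //; rewrite ltn0.
Qed.

Lemma Vlt b k : valid k b -> Ssum b k < 'C((head 0 b).+1, k) /\ k <= head 0 b.
Proof.
elim: b k => [|h rest IH] k; first by case=> /andP [].
case: rest IH => [|h2 rest'] IH Hv.
  case: Hv => /andP [s0 s1] _ /= hl.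
  rewrite Ssum_cons Ssum_nil addn0; split; last by move: hl; rewrite subn0.
  case: k s1 hl => // k _ hl; rewrite binS -addn1 leq_add2l bin_gt0.
  by move: hl; rewrite subn0 => /ltnW.
have [Hv2 h21 k1] := valid_tail Hv.
have [IH1 IH2] := IH _ Hv2.
move: IH1 IH2; rewrite /= => IH1 IH2.
have kh : k <= h by lia.
split => //.
rewrite Ssum_cons; case: k kh IH1 IH2 k1 {Hv Hv2} => // k kh IH1 IH2 k1.
rewrite binS ltn_add2l; apply: leq_trans IH1 _; exact: leq_bin2l.
Qed.

Lemma Vf b k : valid k b -> Smu b k = fk k (Ssum b k).
Proof.
elim: b k => [|h rest IH] k; first by case=> /andP [].
move=> Hv; have [Hlt Hkh] := Vlt Hv.
case: k Hv Hlt Hkh => [|k] Hv Hlt Hkh; first by case: Hv => /andP [] /= _; rewrite ltn0.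
rewrite Ssum_cons Smu_cons.
case: rest IH Hv Hlt Hkh => [|h2 rest'] IH Hv Hlt Hkh.
  rewrite Ssum_nil Smu_nil fE ?fk0 ?addn0 //.
    by rewrite bin_gt0; apply: ltnW.
  by rewrite Hkh.
have [Hv2 h21 k1] := valid_tail Hv.
have [IH1 IH2] := Vlt Hv2.
rewrite (IH _ Hv2) fE //; last by rewrite Hkh.
by apply: leq_trans IH1 _; apply: leq_bin2l.
Qed.

Lemma mu_fk i m v : mu_spec i m v -> v = fk i m.
Proof.
case=> [[-> ->]|[m0 [a [[hs hsort hl Hm] ->]]]]; first by rewrite fk0.
have Hv : valid i a by [].
by rewrite Hm; apply: (Vf Hv).
Qed.

Ltac hyprw :=
  repeat match goal with
  | H : is_true (?a \in ?S) |- context [?a \in ?S] => rewrite H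
  | H : is_true (?a \notin ?S) |- context [?a \in ?S] => rewrite (negbTE H)
  | H : is_true (?a != ?b) |- context [?a == ?b] => rewrite (negbTE H)
  | H : is_true (?a != ?b) |- context [?b == ?a] => rewrite eq_sym (negbTE H)
  end.

Ltac seteq :=
  apply/setP; let w := fresh "w" in intro w; rewrite !inE;
  repeat (match goal with |- context[w == ?a] => have [->|?] := eqVneq w a end);
  rewrite ?eqxx /=; hyprw; rewrite /= ?orbT ?andbT ?orbF ?andbF //=;
  repeat match goal with |- context [?u \in ?S] => case: (u \in S) end; done.

Section KK.
Variable T : finType.
Implicit Types (A : {set {set T}}) (S : {set T}).

Definition shadow (A : {set {set T}}) : {set {set T}} :=
  [set S : {set T} | [exists x : T, (x \notin S) && ((x |: S) \in A)]].

Lemma shadowI (A : {set {set T}}) (S : {set T}) (x : T) : x \notin S -> x |: S \in A -> S \in shadow A.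
Proof. by move=> h1 h2; rewrite inE; apply/existsP; exists x; rewrite h1. Qed.

Lemma shadowP (A : {set {set T}}) (S : {set T}) : reflect (exists2 x, x \notin S & x |: S \in A) (S \in shadow A).
Proof.
rewrite inE; apply: (iffP existsP) => [[x /andP [h1 h2]]|[x h1 h2]]; exists x => //.
by rewrite h1.
Qed.

Lemma swapK (S : {set T}) (a b : T) : a \in S -> b \notin S -> a != b -> a |: ((b |: (S :\ a)) :\ b) = S.
Proof. move=> ha hb hab; seteq. Qed.


Section Comp.
Variables (z j : T).
Hypothesis jz : j != z.

Definition cm (A : {set {set T}}) (S : {set T}) : {set T} :=
  if [&& j \in S, z \notin S & z |: (S :\ j) \notin A] then z |: (S :\ j) else S.

Definition kcomp (A : {set {set T}}) : {set {set T}} := [set cm A S | S in A].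

Definition compb (A : {set {set T}}) (T0 : {set T}) : bool :=
  if (z \in T0) && (j \notin T0) then (T0 \in A) || (j |: (T0 :\ z) \in A)
  else if (j \in T0) && (z \notin T0) then (T0 \in A) && (z |: (T0 :\ j) \in A)
  else T0 \in A.

Lemma compP (A : {set {set T}}) (T0 : {set T}) : (T0 \in kcomp A) = compb A T0.
Proof.
have zj : z != j by rewrite eq_sym.
apply/idP/idP.
  case/imsetP => S SA ->; rewrite /cm.
  case: ifP => [/and3P [hj hz hn]|hn].
    have hz1 : z \in z |: (S :\ j) by rewrite !inE eqxx.
    have hj1 : j \notin z |: (S :\ j) by rewrite !inE (negbTE jz) eqxx.
    by rewrite /compb hz1 hj1 /= swapK // SA orbT.
  rewrite /compb; case: ifP => [_|_]; first by rewrite SA.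
  case: ifP => [/andP [hj hz]|_ //].
  by rewrite SA; move: hn; rewrite hj hz /= => /negbFE.
rewrite /compb; case: ifP => [/andP [hz hj]|h1].
  case/orP => [h|h].
    apply/imsetP; exists T0 => //; rewrite /cm (negbTE hj) //.
  case: (boolP (T0 \in A)) => hT.
    apply/imsetP; exists T0 => //; rewrite /cm (negbTE hj) //.
  apply/imsetP; exists (j |: (T0 :\ z)) => //.
  have hj1 : j \in j |: (T0 :\ z) by rewrite !inE eqxx.
  have hz1 : z \notin j |: (T0 :\ z) by rewrite !inE (negbTE zj) eqxx.
  by rewrite /cm hj1 hz1 swapK // (negbTE hT).
case: ifP => [/andP [hj hz] /andP [hT hT2]|h2 hT].
  apply/imsetP; exists T0 => //; rewrite /cm hj hz hT2 //.
apply/imsetP; exists T0 => //; rewrite /cm.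
case: (j \in T0) (z \in T0) h2 => [] [] //.
Qed.


Lemma cm_inj (A : {set {set T}}) : {in A &, injective (cm A)}.
Proof.
move=> S1 S2 h1 h2; rewrite /cm.
case: ifP => [/and3P [a1 b1 c1]|n1]; case: ifP => [/and3P [a2 b2 c2]|n2].
- by move=> e; rewrite -(swapK a1 b1 jz) e swapK.
- by move=> e; move: c1; rewrite e h2.
- by move=> e; move: c2; rewrite -e h1.
- by [].
Qed.

Lemma comp_card (A : {set {set T}}) : #|kcomp A| = #|A|.
Proof. exact: card_in_imset (@cm_inj A). Qed.

Lemma card_swap (S : {set T}) : j \in S -> z \notin S -> #|z |: (S :\ j)| = #|S|.
Proof.
move=> hj hz; rewrite cardsU1 [in RHS](cardsD1 j) hj !inE.
by rewrite (negbTE hz) andbF.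
Qed.

Lemma comp_unif (A : {set {set T}}) k :
  {in A, forall S, #|S| = k} -> {in kcomp A, forall S, #|S| = k}.
Proof.
move=> hA S /imsetP [S0 S0A ->]; rewrite /cm.
case: ifP => [/and3P [a b c]|_]; last exact: hA.
by rewrite card_swap // hA.
Qed.

Lemma shadow_comp (A : {set {set T}}) : shadow (kcomp A) \subset kcomp (shadow A).
Proof.
have zj : z != j by rewrite eq_sym.
apply/subsetP => T0 /shadowP [x xT hU]; rewrite compP /compb.
rewrite compP /compb !in_setU1 in hU.
case: (eqVneq x z) hU => [exz|xz]; case: (eqVneq x j) => [exj|xj] hU.
- by move: jz; rewrite -exz -exj eqxx.
-
  subst x; rewrite /= in hU; rewrite (negbTE xT) /= andbT.
  case hjT : (j \in T0) hU => /= hU.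
    apply/andP; split; first exact: shadowI xT hU.
    apply: (@shadowI _ _ j); first by rewrite !inE eqxx (negbTE jz).
    by rewrite (_ : j |: (z |: T0 :\ j) = z |: T0) //; seteq.
  case/orP: hU => hU; first exact: shadowI xT hU.
  apply: (@shadowI _ _ j); first by rewrite hjT.
  by move: hU; rewrite (_ : j |: ((z |: T0) :\ z) = j |: T0) //; seteq.
-
  subst x; rewrite /= in hU; rewrite (negbTE xT) /= andbT.
  case hzT : (z \in T0) hU => /= hU.
    by apply/orP; left; exact: shadowI xT hU.
  by case/andP: hU => hU _; exact: shadowI xT hU.
  rewrite /= in hU.
  case hzT : (z \in T0) hU; case hjT : (j \in T0) => //= hU.
  + exact: shadowI xT hU.
  + case/orP: hU => hU; first by apply/orP; left; exact: shadowI xT hU.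
    apply/orP; right; apply: (@shadowI _ _ x).
      by rewrite !inE negb_or xj /= negb_and xT orbT.
    by move: hU; rewrite (_ : j |: ((x |: T0) :\ z) = x |: (j |: T0 :\ z)) //; seteq.
  + case/andP: hU => hU hU2; apply/andP; split; first exact: shadowI xT hU.
    apply: (@shadowI _ _ x).
      by rewrite !inE negb_or xz /= negb_and xT orbT.
    by move: hU2; rewrite (_ : z |: ((x |: T0) :\ j) = x |: (z |: T0 :\ j)) //; seteq.
  + exact: shadowI xT hU.
Qed.

Lemma shadow_comp_card (A : {set {set T}}) : #|shadow (kcomp A)| <= #|shadow A|.
Proof.
rewrite -[#|shadow A|](comp_card (shadow A)); exact: subset_leq_card (shadow_comp A).
Qed.

Lemma comp_cnt (A : {set {set T}}) (S : {set T}) :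
  S \in A -> j \in S -> z \notin S -> z |: (S :\ j) \notin A ->
  #|[set S0 in kcomp A | z \notin S0]| < #|[set S0 in A | z \notin S0]|.
Proof.
move=> SA hj hz hn; apply: proper_card; apply/properP; split.
  apply/subsetP => T0; rewrite !inE compP /compb => /andP [h hzT].
  rewrite hzT andbT; move: h; rewrite (negbTE hzT) /=.
  by case: (j \in T0) => //= /andP [].
exists S; first by rewrite !inE SA hz.
by rewrite inE compP /compb (negbTE hz) /= hj /= (negbTE hn) andbF.
Qed.

End Comp.
End KK.

Section KKmain.
Variables (T : finType) (z : T).

Lemma stable_split (A : {set {set T}}) k :
  (forall S : {set T}, S \in A -> #|S| = k.+1) ->
  (forall S y, S \in A -> y \in S -> z \notin S -> z |: (S :\ y) \in A) ->
  let A0 := [set S in A | z \notin S] in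
  let A1 := [set S : {set T} | (z \notin S) && (z |: S \in A)] in
  [/\ #|A| = #|A0| + #|A1|, shadow A0 \subset A1, #|A1| + #|shadow A1| <= #|shadow A|,
      (forall S : {set T}, S \in A1 -> #|S| = k) & (0 < #|A| -> 0 < #|A1|)].
Proof.
move=> hA st A0 A1.
have inj1 : {in A1 &, injective (fun S => z |: S)}.
  move=> S1 S2; rewrite !inE => /andP [h1 _] /andP [h2 _] e.
  by rewrite -(setU1K h1) e setU1K.
split.
- rewrite -(cardsID [set S : {set T} | z \in S] A) addnC; congr (_ + _).
    by apply: eq_card => S; rewrite !inE andbC.
  rewrite -(card_in_imset inj1); apply: eq_card => S; rewrite !inE.
  apply/andP/imsetP => [[SA zS]|[S1 S1A ->]].
    exists (S :\ z); first by rewrite !inE eqxx /= setD1K.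
    by rewrite setD1K.
  by move: S1A; rewrite inE => /andP [_ ->]; rewrite setU11.
- apply/subsetP => S /shadowP [y yS]; rewrite !inE negb_or => /andP [yA /andP [zy zS]].
  rewrite zS /=; have := st _ y yA (setU11 y S).
  rewrite !inE negb_or zy zS => /(_ isT).
  by rewrite (_ : (y |: S) :\ y = S) //; apply/setP => w; rewrite !inE; case: (eqVneq w y) => // ->; rewrite (negbTE yS).
- have sh1z : forall S, S \in shadow A1 -> z \notin S.
    move=> S /shadowP [y _]; rewrite inE => /andP [h _]; move: h; by rewrite in_setU1 negb_or => /andP [_ ->].
  have injz : {in shadow A1 &, injective (fun S => z |: S)}.
    by move=> S1 S2 /sh1z h1 /sh1z h2 e; rewrite -(setU1K h1) e setU1K.
  rewrite -(cardsID [set S : {set T} | z \in S] (shadow A)) addnC.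
  apply: leq_add.
    rewrite -(card_in_imset injz); apply: subset_leq_card; apply/subsetP => S.
    case/imsetP => S1 /[dup] S1s /shadowP [y yS1]; rewrite inE => /andP [h yA] ->.
    move: h; rewrite in_setU1 negb_or => /andP [zy zS1].
    rewrite in_setI inE setU11 andbT; apply: (@shadowI _ _ _ y).
      by rewrite !inE negb_or eq_sym zy.
    by rewrite setUCA.
  apply: subset_leq_card; apply/subsetP => S; rewrite [S \in A1]inE => /andP [zS SA].
  by rewrite in_setD inE zS /=; exact: shadowI zS SA.
- move=> S; rewrite !inE => /andP [zS /hA]; rewrite cardsU1 zS add1n; by case.
- move=> h; have [S SA] := card_gt0P h.
  case: (boolP (z \in S)) => zS.
    apply/card_gt0P; exists (S :\ z); by rewrite !inE eqxx /= setD1K.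
  have : 0 < #|S| by rewrite hA.
  move/card_gt0P => [y yS]; have yz : y != z by apply: contraNneq zS => <-.
  apply/card_gt0P; exists (S :\ y); rewrite inE in_setD1 negb_and zS orbT /=.
  exact: st.
Qed.

End KKmain.

Theorem KK (T : finType) (z : T) k (A : {set {set T}}) :
  (forall S : {set T}, S \in A -> #|S| = k) -> fk k #|A| <= #|shadow A|.
Proof.
elim: k A => [|k IHk] A hA; first by [].
suff main : forall m c (A : {set {set T}}), #|A| < m ->
  #|[set S in A | z \notin S]| < c ->
  (forall S : {set T}, S \in A -> #|S| = k.+1) -> fk k.+1 #|A| <= #|shadow A|.
  exact: (main #|A|.+1 #|[set S in A | z \notin S]|.+1).
elim => [|m IHm] c; first by [].
elim: c => [|c IHc] B; first by [].
move=> hm hc hB.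
case: (boolP [forall S in B, forall j, (j \in S) && (z \notin S) ==> (z |: (S :\ j) \in B)]) => stab.
  have st : forall S y, S \in B -> y \in S -> z \notin S -> z |: (S :\ y) \in B.
    move=> S y SB yS zS; move/forall_inP: stab => /(_ S SB) /forallP /(_ y).
    by rewrite yS zS => /implyP; apply.
  have [e1 s0 s1 u1 p1] := stable_split hB st.
  case: (posnP #|B|) => [->|B0]; first by rewrite fk0.
  set A0 := [set S in B | z \notin S] in e1 s0 s1 u1 p1 *.
  set A1 := [set S : {set T} | (z \notin S) && (z |: S \in B)] in e1 s0 s1 u1 p1 *.
  have x0 := p1 B0.
  have hA0 : fk k.+1 #|A0| <= #|shadow A0|.
    apply: (IHm #|[set S in A0 | z \notin S]|.+1) => //.
      by move: hm; rewrite e1; lia.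
    by move=> S; rewrite inE => /andP [/hB].
  have hA1 := IHk A1 u1.
  have hsub := subset_leq_card s0.
  have := @fkN k #|B| #|A1| x0.
  rewrite e1 addnK => /(_ (leq_trans hA0 hsub)) hN.
  apply: (leq_trans hN); apply: leq_trans s1; by rewrite leq_add2l.
move/forall_inPn: stab => [S SB] /forallPn [j]; rewrite negb_imply => /andP [/andP [hj hz] hn].
have hjz : j != z by apply/eqP => e; move: hz; rewrite -e hj.
have := IHc (kcomp z j B); rewrite (comp_card hjz) => /(_ hm).
move=> /(_ (leq_trans (comp_cnt hjz SB hj hz hn) _)) h.
apply: leq_trans (h _ _) (shadow_comp_card hjz B) => //.
exact: comp_unif.
Qed.

Section Constr.
Variable T : finType.

Definition vo (F : {set T}) (o : option T) : bool := if o is Some v then v \in F else true.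

Definition phi (F : {set T}) (o : option T) : {set (T + T)%type} :=
  [set x : (T + T)%type | match x with inl u => (u \in F) && (Some u != o) | inr u => Some u == o end].

Definition PP (A : {set {set T}}) : {set {set T} * option T} :=
  [set p | (p.1 \in A) && vo p.1 p.2].

Lemma card_vo (F : {set T}) : #|[set o | vo F o]| = #|F|.+1.
Proof.
have -> : [set o | vo F o] = None |: [set Some u | u in F].
  apply/setP => -[u|]; rewrite !inE //=.
  apply/idP/imsetP => [h|[w wF [->]]] //; by exists u.
rewrite cardsU1 card_imset; last by move=> ? ? [].
have -> : None \notin [set Some u | u in F] by apply/imsetP => -[].
by [].
Qed.

Lemma card_PP (A : {set {set T}}) k : (forall F, F \in A -> #|F| = k) ->
  #|PP A| = #|A| * k.+1.
Proof.
move=> hA.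
rewrite -sum1_card.
rewrite (eq_bigl (fun p => (p.1 \in A) && vo p.1 p.2)); last by move=> p; rewrite inE.
rewrite -(pair_big_dep (fun F => F \in A) (fun F o => vo F o) (fun _ _ => 1)) /=.
rewrite -sum1_card big_distrl /=; apply: eq_bigr => F FA.
by rewrite mul1n sum1dep_card -(hA F FA) -card_vo; apply: eq_card => o; rewrite inE.
Qed.

Lemma phi_inj (A : {set {set T}}) : {in PP A &, forall p q, phi p.1 p.2 = phi q.1 q.2 -> p = q}.
Proof.
move=> [F o] [F' o'] /=; rewrite !inE /= => /andP [_ v1] /andP [_ v2] e.
have eo : o = o'.
  case: o v1 e => [v|] v1 e.
    have : inr v \in phi F (Some v) by rewrite inE.
    by rewrite e inE /= => /eqP.
  case: o' v2 e => [v'|] // v2 e.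
  have : inr v' \in phi F' (Some v') by rewrite inE.
  by rewrite -e inE.
subst o'; congr (_, _); apply/setP => u.
have key : forall G, vo G o -> (u \in G) = (inl u \in phi G o) || (Some u == o).
  move=> G vG; rewrite inE; case: (eqVneq (Some u) o) => [eu|ne]; last by rewrite andbT orbF.
  by rewrite orbT; move: vG; rewrite -eu.
by rewrite (key _ v1) (key _ v2) e.
Qed.

Lemma Some_inj' : injective (@Some T). Proof. by move=> ? ? []. Qed.

Lemma card_phi (F : {set T}) o : vo F o -> #|phi F o| = #|F|.
Proof.
case: o => [v|] /= hv.
  have -> : phi F (Some v) = inr v |: [set inl u | u in F :\ v].
    apply/setP => -[u|u]; rewrite !inE /= (inj_eq Some_inj').
      apply/idP/imsetP.
        by move=> /andP [uF uv]; exists u => //; rewrite !inE uF uv.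
      by move=> [w]; rewrite !inE => /andP [wv wF] [->]; rewrite wF wv.
    rewrite (_ : (inr u \in _) = false) ?orbF //.
    by apply/negbTE/imsetP => -[].
  rewrite cardsU1 card_imset; last by move=> ? ? [].
  rewrite (_ : inr v \notin _ = true); last by apply/imsetP => -[].
  by rewrite (cardsD1 v F) hv.
have -> : phi F None = [set inl u | u in F].
  apply/setP => -[u|u]; rewrite !inE /=.
    by rewrite andbT; apply/idP/imsetP => [h|[w wF [->]]] //; exists u.
  by apply/esym/negbTE/imsetP => -[].
by rewrite card_imset //; move=> ? ? [].
Qed.

End Constr.

Lemma shadow_B (T : finType) (D : {set {set T}}) i :
  simplicial_complex D ->
  shadow [set phi p.1 p.2 | p in PP [set s in D | #|s| == i.+1]] \subset
    [set phi p.1 p.2 | p in PP [set s in D | #|s| == i]].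
Proof.
move=> [_ hD]; apply/subsetP => T0 /shadowP [x xT /imsetP [[F o] pP e]].
move: pP; rewrite !inE /= => /andP [/andP [FD /eqP cF] vF].
have ET0 : T0 = (phi F o) :\ x by rewrite -e setU1K.
have xin : x \in phi F o by rewrite -e setU11.
case: x xT e ET0 xin => [u|u] xT e ET0 xin.
  move: xin; rewrite inE => /andP [uF uo].
  apply/imsetP; exists (F :\ u, o).
    rewrite !inE /=; apply/andP; split.
      apply/andP; split; first by apply: hD FD _; apply: subsetDl.
      by move: cF; rewrite (cardsD1 u F) uF add1n => -[->].
    case: o vF uo {e ET0} => [v|] //= vF uo; rewrite !inE vF andbT.
    by apply: contra uo => /eqP ->.
  rewrite ET0 /=; apply/setP => -[w|w]; rewrite !inE /=.
    by rewrite andbA [(w != u) && _]andbC.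
  by [].
move: xin; rewrite inE => /eqP eo; subst o.
apply/imsetP; exists (F :\ u, None).
  rewrite !inE /=; apply/andP; split => //.
  apply/andP; split; first by apply: hD FD _; apply: subsetDl.
  by move: cF; rewrite (cardsD1 u F) (vF : u \in F) add1n => -[->].
rewrite ET0 /=; apply/setP => -[w|w]; rewrite !inE /=.
  by rewrite (inj_eq (@Some_inj' _)) andbT andbC.
case: (eqVneq w u) => [->|wu]; first by rewrite eqxx.
by rewrite (inj_eq (@Some_inj' _)) (negbTE wu) andbF.
Qed.

Theorem corollary3p8 (T : finType) (D : {set {set T}}) :
  simplicial_complex D ->
  forall i : nat, 1 <= i -> i <= (cdim D).-1 ->
  forall v : nat, mu_spec i.+1 (i.+2 * fnum D i.+1) v ->
  v <= i.+1 * fnum D i.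
Proof.
move=> hD i _ _ v /mu_fk ->.
set A := [set s in D | #|s| == i.+1].
set A' := [set s in D | #|s| == i].
set B := [set phi p.1 p.2 | p in PP A].
have cA : forall F, F \in A -> #|F| = i.+1 by move=> F; rewrite inE => /andP [_ /eqP].
have cA' : forall F, F \in A' -> #|F| = i by move=> F; rewrite inE => /andP [_ /eqP].
have cB : #|B| = i.+2 * fnum D i.+1.
  rewrite card_in_imset; last exact: phi_inj.
  by rewrite (card_PP cA) mulnC.
have uB : forall S, S \in B -> #|S| = i.+1.
  move=> S /imsetP [p]; rewrite inE => /andP [pA vp] ->; rewrite card_phi //; exact: cA.
rewrite -cB.
case: (pickP (fun _ : (T + T)%type => true)) => [z _|none].
  apply: leq_trans (KK z uB) _.
  apply: leq_trans (subset_leq_card (shadow_B i hD)) _.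
  apply: leq_trans (leq_imset_card _ _) _.
  by rewrite (card_PP cA') mulnC.
have -> : #|B| = 0.
  apply/eqP; rewrite cards_eq0; apply/eqP/setP => S; rewrite inE.
  apply/negbTE/imsetP => -[[F o]]; rewrite inE /= => /andP [/cA cF vF] _.
  move: cF; case: (set_0Vmem F) => [->|[u uF]]; first by rewrite cards0.
  by have := none (inl u).
by rewrite fk0.
Qed.
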